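(* Let $G=(V,E)$ be a graph with node weights $c_v\ge1$, and let $\lambda\in\mathbb R$. Let $x\in\mathbb R^V$ satisfy $x\ge0$, $\sum_{v\in V}c_vx_v=1$, and $\sum_{v\in V}x_v\,q(\sigma)_v\ge\lambda$ for every ordering $\sigma$ of $V$. Then there exists $\theta\in[0,1]$ such that the set $S_\theta=\{v\in V: x_v\ge\theta\}$ is nonempty and has density $\rho(S_\theta)\ge\lambda$.
   Context: For nonempty $S\subseteq V$, $\rho(S)=|E(S)|/\sum_{v\in S}c_v$, where $E(S)$ is the set of edges with both endpoints in $S$. For an ordering $\sigma$ of $V$ and $v\in V$, $q(\sigma)_v=|\{\{u,v\}\in E: u \text{ precedes } v \text{ in }\sigma\}|$. *)

(* Defs.v *)
From mathcomp Require Import all_boot all_order all_algebra.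
Set Implicit Arguments. Unset Strict Implicit. Unset Printing Implicit Defensive.
Import Order.TTheory GRing.Theory Num.Theory.
Local Open Scope ring_scope.

Definition simple_graph (V : finType) (e : rel V) : Prop :=
  (forall u v, e u v = e v u) /\ (forall v, ~~ e v v).

Definition edges (V : finType) (e : rel V) : {set {set V}} :=
  [set A : {set V} | [exists u, exists v, e u v && (A == [set u; v])]].

Definition edges_in (V : finType) (e : rel V) (S : {set V}) : {set {set V}} :=
  [set A in edges e | A \subset S].

Definition density (R : realFieldType) (V : finType) (e : rel V) (c : V -> R)
  (S : {set V}) : R :=
  (#|edges_in e S|)%:R / (\sum_(v in S) c v).

(* An ordering sigma of V is a duplicate-free enumeration of V (a sequence that
   is a permutation of enum V); u precedes v iff index u s < index v s. *)
Definition ordering (V : finType) (s : seq V) : Prop := perm_eq s (enum V).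

Definition q (V : finType) (e : rel V) (s : seq V) (v : V) : nat :=
  #|[set u | e u v && (index u s < index v s)%N]|.

(* Main.v *)
Require Import Defs.
From mathcomp Require Import all_boot all_order all_algebra.
From mathcomp Require Import ring lra zify.
Set Implicit Arguments. Unset Strict Implicit. Unset Printing Implicit Defensive.
Import Order.TTheory GRing.Theory Num.Theory.
Local Open Scope ring_scope.

Lemma layer (R : realFieldType) (V : finType) (a : V -> R) (n : nat) :
  forall (x : V -> R) (A : {set V}), #|A| = n ->
  (forall v, v \in A -> 0 <= x v) ->
  (forall w, w \in A -> 0 < x w -> \sum_(v in A | x w <= x v) a v < 0) ->
  \sum_(v in A) x v * a v <= 0 /\
  ((exists2 w, w \in A & 0 < x w) -> \sum_(v in A) x v * a v < 0).
Proof.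
elim: n => [|n IH] x A cA x0 hF.
  have -> : A = set0 by apply/eqP; rewrite -cards_eq0 cA.
  by rewrite big_set0; split => // -[w]; rewrite inE.
have [m0 m0A] : exists m, m \in A.
  by apply/set0Pn; rewrite -cards_eq0 cA.
case: (@arg_minP _ R _ m0 (mem A) x m0A) => m mA mmin.
have {}mA : m \in A by exact: mA.
have {}mmin : forall j, j \in A -> x m <= x j by exact: mmin.
set y := fun v => x v - x m.
have e1 : \sum_(v in A) x v * a v =
   x m * \sum_(v in A | x m <= x v) a v + \sum_(v in A :\ m) y v * a v.
  have -> : \sum_(v in A | x m <= x v) a v = \sum_(v in A) a v.
    by apply: eq_bigl => v; case vA: (v \in A); rewrite ?andbT ?andbF //= mmin.
  rewrite (big_setD1 m mA) /= [\sum_(v in A) a v](big_setD1 m mA) /= mulrDr -addrA.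
  congr (_ + _); rewrite mulr_sumr -big_split /=.
  by apply: eq_bigr => v _; rewrite /y mulrBl addrC subrK.
have cB : #|A :\ m| = n by move: cA; rewrite (cardsD1 m) mA add1n => -[].
have y0 : forall v, v \in A :\ m -> 0 <= y v.
  by move=> v; rewrite in_setD1 => /andP[_ vA]; rewrite /y subr_ge0 mmin.
have hFy : forall w, w \in A :\ m -> 0 < y w ->
    \sum_(v in A :\ m | y w <= y v) a v < 0.
  move=> w; rewrite in_setD1 => /andP[_ wA]; rewrite /y subr_gt0 => lt_mw.
  rewrite (eq_bigl (fun v => (v \in A) && (x w <= x v))); first by apply: hF wA _; exact: le_lt_trans (x0 m mA) lt_mw.
  move=> v; rewrite in_setD1 lerD2r.
  case: (eqVneq v m) => [->|] //=.
  by rewrite mA /= leNgt lt_mw.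
have [IH1 IH2] := IH y (A :\ m) cB y0 hFy.
rewrite e1; have xm0 := x0 m mA.
have hFm : x m * \sum_(v in A | x m <= x v) a v <= 0.
  case: (lerP (x m) 0) => [xle|xp].
    by rewrite (_ : x m = 0) ?mul0r //; lra.
  by apply: mulr_ge0_le0 => //; apply: ltW; apply: hF.
split; first by lra.
move=> [w wA xw].
case: (lerP (x m) 0) => [xle|xp]; last first.
  suff : x m * \sum_(v in A | x m <= x v) a v < 0 by lra.
  by rewrite pmulr_rlt0 //; exact: (hF m mA xp).
have xm00 : x m = 0 by lra.
rewrite xm00 mul0r add0r; apply: IH2; exists w.
  rewrite in_setD1 wA andbT; apply/eqP => ewm; move: xw; by rewrite ewm xm00 ltxx.
by rewrite /y xm00 subr0.
Qed.

Lemma edges_count (V : finType) (e : rel V) (s : seq V) (S : {set V}) :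
  simple_graph e -> perm_eq s (enum V) ->
  (forall u v, v \in S -> (index u s < index v s)%N -> u \in S) ->
  #|edges_in e S| = (\sum_(v in S) q e s v)%N.
Proof.
move=> [esym eirr] ps down.
have ins : forall v, v \in s by move=> v; rewrite (perm_mem ps) mem_enum.
have idx_inj : forall u v, index u s = index v s -> u = v.
  move=> u v h; rewrite -(nth_index u (ins u)) h nth_index //.
set Q := fun v => [set u | (u \in S) && e u v && (index u s < index v s)%N].
have -> : (\sum_(v in S) q e s v = \sum_(v in S) #|Q v|)%N.
  apply: eq_bigr => v vS; rewrite /q; apply: eq_card => u; rewrite !inE.
  case: (boolP (index u s < index v s)%N) => h; rewrite ?andbT ?andbF //.
  by rewrite (down u v vS h).
set P := [set p : V * V | (p.1 \in S) && (p.2 \in Q p.1)].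
have -> : (\sum_(v in S) #|Q v| = #|P|)%N.
  rewrite -sum1_card.
  under eq_bigr => v _ do rewrite -sum1_card.
  rewrite pair_big_dep /=; apply: eq_bigl => p; by rewrite /P !inE.
rewrite -(@card_in_imset _ _ (fun p : V * V => [set p.2; p.1]) (mem P)); last first.
  move=> [v u] [v' u']; rewrite !inE /= => /andP[vS /andP[/andP[uS euv] iuv]].
  move=> /andP[vS' /andP[/andP[uS' euv'] iuv']] eqA.
  have hv : (v == u') || (v == v') by rewrite -in_set2 -eqA in_set2 eqxx orbT.
  have hu : (u == u') || (u == v') by rewrite -in_set2 -eqA in_set2 eqxx.
  have hv' : (v' == u) || (v' == v) by rewrite -in_set2 eqA in_set2 eqxx orbT.
  case/orP: hv => /eqP hv.
    subst u'; case/orP: hv' => /eqP hv'; subst v'; lia.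
  subst v'; congr (_, _).
  case/orP: hu => /eqP hu //; subst u; lia.
apply: eq_card => A; rewrite !inE.
apply/idP/idP; last first.
  move=> /imsetP [[v u]] /=; rewrite !inE /= => /andP[vS /andP[/andP[uS euv] iuv]] ->.
  apply/andP; split.
    by apply/existsP; exists u; apply/existsP; exists v; rewrite euv eqxx.
  by apply/subsetP => z; rewrite !inE => /orP[]/eqP->.
move=> /andP[/existsP[u /existsP[v /andP[euv /eqP eA]]] sub].
have uS : u \in S by apply: (subsetP sub); rewrite eA !inE eqxx.
have vS : v \in S by apply: (subsetP sub); rewrite eA !inE eqxx orbT.
have neq : index u s != index v s.
  apply/eqP => /idx_inj h; move: euv; rewrite h; by rewrite (negbTE (eirr v)).
apply/imsetP; case: (ltngtP (index u s) (index v s)) => h.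
- exists (v, u); last by rewrite eA.
  by rewrite !inE /= vS uS euv h.
- exists (u, v); last by rewrite eA setUC.
  by rewrite !inE /= vS uS esym euv h.
- by rewrite h eqxx in neq.
Qed.

Theorem mainTheorem9 (R : realFieldType) (V : finType) (e : rel V)
  (c : V -> R) (lambda : R) (x : V -> R) :
  simple_graph e ->
  (forall v, 1 <= c v) ->
  (forall v, 0 <= x v) ->
  \sum_(v : V) c v * x v = 1 ->
  (forall s : seq V, ordering s -> lambda <= \sum_(v : V) x v * (q e s v)%:R) ->
  exists theta : R, [/\ 0 <= theta, theta <= 1,
    [set v | theta <= x v] != set0 &
    lambda <= density e c [set v | theta <= x v]].
Proof.
move=> sg c1 x0 sumcx hq.
pose r := fun u v => x v <= x u.
set s := sort r (enum V).
have ps : perm_eq s (enum V) by apply/permPl; exact: perm_sort.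
have ins : forall v, v \in s by move=> v; rewrite (perm_mem ps) mem_enum.
have rtot : total r by move=> u v; rewrite /r le_total.
have rtr : transitive r by move=> b a d; rewrite /r => h1 h2; exact: le_trans h2 h1.
have srt : sorted r s := sort_sorted rtot _.
have ordx : forall u v, (index u s < index v s)%N -> x v <= x u.
  by move=> u v h; have := sorted_ltn_index rtr srt u v (ins u) (ins v) h.
pose a := fun v => (q e s v)%:R - lambda * c v.
pose F := fun t => \sum_(v in [set v | t <= x v]) a v.
have key : forall t, (#|edges_in e [set v | t <= x v]|)%:R
     - lambda * \sum_(v in [set v | t <= x v]) c v = F t.
  move=> t; rewrite (edges_count sg ps); last first.
    by move=> u v; rewrite !inE => tv /ordx; apply: le_trans.
  by rewrite natr_sum mulr_sumr -sumrB.
have cpos : forall v, 0 < c v by move=> v; apply: lt_le_trans (c1 v); exact: ltr01.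
case: (boolP [exists w, (0 < x w) && (0 <= F (x w))]).
  move=> /existsP [w /andP [xw Fw]].
  have wS : w \in [set v | x w <= x v] by rewrite inE.
  have sc : 0 < \sum_(v in [set v | x w <= x v]) c v.
    rewrite (bigD1 w) //=; apply: lt_le_trans (cpos w) _.
    by rewrite lerDl sumr_ge0 // => v _; exact: ltW.
  exists (x w); split.
  - exact: x0.
  - rewrite -sumcx (bigD1 w) //=.
    have h1 : x w <= c w * x w by rewrite ler_peMl.
    have h2 : 0 <= \sum_(i | i != w) c i * x i.
      by apply: sumr_ge0 => v _; apply: mulr_ge0 => //; exact: ltW.
    lra.
  - by apply/set0Pn; exists w.
  - rewrite /density ler_pdivlMr //; rewrite -key in Fw; lra.
rewrite negb_exists => /forallP hall.
have hF : forall w, w \in [set: V] -> 0 < x w ->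
    \sum_(v in [set: V] | x w <= x v) a v < 0.
  move=> w _ xw; move: (hall w); rewrite xw /= -ltNge.
  suff -> : \sum_(v in [set: V] | x w <= x v) a v = F (x w) by [].
  by apply: eq_bigl => v; rewrite !inE.
have [_ L2] := @layer R V a #|[set: V]| x [set: V] erefl (fun v _ => x0 v) hF.
have [w _ xw] : exists2 w, w \in [set: V] & 0 < x w.
  apply/exists_inP; apply: contraT; rewrite negb_exists_in => /forall_inP h.
  have : \sum_(v : V) c v * x v = 0.
    apply: big1 => v _.
    have : x v = 0 by have := x0 v; have := h v (in_setT v); rewrite -leNgt; lra.
    by move=> ->; rewrite mulr0.
  by rewrite sumcx => /eqP; rewrite oner_eq0.
have := L2 (ex_intro2 _ _ w (in_setT w) xw).
have hl := hq s ps.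
have -> : \sum_(v in [set: V]) x v * a v =
   \sum_(v : V) x v * (q e s v)%:R - lambda * \sum_(v : V) c v * x v.
  rewrite mulr_sumr -sumrB (eq_bigl xpredT); last by move=> v; rewrite inE.
  by apply: eq_bigr => v _; rewrite /a; ring.
rewrite sumcx; lra.
Qed.
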